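(* There are absolute constants $k$ and $C$ such that the following holds. Let $G$ be a finite semisimple group, and let $H$ be a finite group having a nontrivial Abelian normal subgroup. Then the count-free $(k, C)$-WL Version I algorithm distinguishes $G$ from $H$.
   Context: A finite group is semisimple if it has no nontrivial Abelian normal subgroup. Count-free pebble game Version I on finite groups $G,H$ with $m$ pebble pairs: if $|G|\ne|H|$ Spoiler wins at once; each round Spoiler picks up a pebble pair, the winning condition is checked, Spoiler places one pebble of the pair on an element of either group and Duplicator places its partner on an element of the other group. Spoiler wins when, for the pebbled elements $g_1,\ldots,g_\ell\in G$ and corresponding $h_1,\ldots,h_\ell\in H$, it is not the case that for all $i,j,t$: $g_i=g_j\iff h_i=h_j$ and $g_ig_j=g_t\iff h_ih_j=h_t$. The count-free $(k,r)$-WL Version I distinguishes $G$ and $H$ if Spoiler has a strategy to win this game with $k+1$ pebble pairs within $r$ rounds (equivalently, the count-free $k$-dimensional WL Version I refinement yields different color sets after $r$ rounds). *)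

(* Defs.v *)
From mathcomp Require Import all_boot all_fingroup.
Set Implicit Arguments. Unset Strict Implicit. Unset Printing Implicit Defensive.
Local Open Scope group_scope.

(* A finite group is modelled as a finGroupType gT, the group being [set: gT]. *)

Definition semisimple (gT : finGroupType) : Prop :=
  forall N : {group gT}, N <| [set: gT] -> abelian N -> N = 1 :> {set gT}.

(* A pebble configuration with m pebble pairs: pair i is either off the
   board (None) or placed on (g_i, h_i). *)
Definition config (gT hT : finGroupType) (m : nat) := 'I_m -> option (gT * hT).

Definition empty_config (gT hT : finGroupType) (m : nat) : config gT hT m :=
  fun _ => None.

Definition place (gT hT : finGroupType) (m : nat) (c : config gT hT m)
  (i : 'I_m) (p : gT * hT) : config gT hT m :=
  fun j => if j == i then Some p else c j.

Definition pebble_iso (gT hT : finGroupType) (m : nat) (c : config gT hT m) : Prop :=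
  forall (i j t : 'I_m) (gi gj gt : gT) (hi hj ht : hT),
    c i = Some (gi, hi) -> c j = Some (gj, hj) -> c t = Some (gt, ht) ->
    (gi = gj <-> hi = hj) /\ (gi * gj = gt <-> hi * hj = ht).

Fixpoint spoiler_wins (gT hT : finGroupType) (m : nat) (r : nat)
  (c : config gT hT m) : Prop :=
  ~ pebble_iso c \/
  match r with
  | 0 => False
  | r'.+1 =>
      exists i : 'I_m,
        (exists g : gT, forall h : hT, spoiler_wins r' (place c i (g, h))) \/
        (exists h : hT, forall g : gT, spoiler_wins r' (place c i (g, h)))
  end.

Definition wl1_distinguishes (k r : nat) (gT hT : finGroupType) : Prop :=
  #|gT| <> #|hT| \/ @spoiler_wins gT hT k.+1 r (@empty_config gT hT k.+1).

(* Main.v *)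
Require Import Defs.
From mathcomp Require Import all_boot all_fingroup.
From Stdlib Require Import Classical.
Local Open Scope group_scope.

Lemma semisimple_noncomm (gT : finGroupType) (Hs : semisimple gT) (g : gT) :
  g != 1 -> exists y : gT, g * (g ^ y) != (g ^ y) * g.
Proof.
move=> ng1.
apply/not_all_not_ex => /= Hc.
have Hcm : forall y, g * g ^ y = g ^ y * g by move=> y; apply/eqP; apply/negPn/negP => H; exact: Hc y H.
pose M := <<g ^: [set: gT]>>%G.
have nM : M <| [set: gT].
  by rewrite /normal subsetT /= norms_gen // class_norm.
have aM : abelian M.
  rewrite abelian_gen; apply/centsP => a /imsetP[u _ ->] b /imsetP[v _ ->].
  have E := congr1 (fun t => t ^ u) (Hcm (v * u^-1)).
  have e : (g ^ (v * u^-1)) ^ u = g ^ v by rewrite -conjgM mulgKV.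
  rewrite /= conjMg e in E. by rewrite /commute E conjMg e.
have := Hs M nM aM => M1.
have : g \in M by rewrite mem_gen // class_refl.
by rewrite M1 inE (negbTE ng1).
Qed.

Theorem lemma6p6 :
  exists k C : nat,
    forall (gT hT : finGroupType),
      semisimple gT ->
      (exists N : {group hT},
          [&& N <| [set: hT], abelian N & N != 1%G]) ->
      wl1_distinguishes k C gT hT.
Proof.
exists 4, 5 => gT hT Hs [N /and3P[nN aN ntN]].
have [x xN nx1] : exists2 x, x \in N & x != 1 by apply/trivgPn.
right.
pose i0 := @Ordinal 5 0 isT. pose i1 := @Ordinal 5 1 isT.
pose i2 := @Ordinal 5 2 isT. pose i3 := @Ordinal 5 3 isT.
pose i4 := @Ordinal 5 4 isT.
right; exists i0; right; exists x => g.
have [y Hy] : exists y : gT, g != 1 -> g * (g ^ y) != (g ^ y) * g.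
  case: (eqVneq g 1) => [->|ng]; first by exists 1.
  by have [y Hy] := @semisimple_noncomm _ Hs _ ng; exists y.
right; exists i1; left; exists y => y'.
right; exists i2; left; exists (g * y) => w'.
right; exists i3; left; exists (g ^ y) => z'.
right; exists i4; left; exists (g * g ^ y) => v'.
left => Hiso.
set c := place _ _ _ in Hiso.
have c0 : c i0 = Some (g, x) by [].
have c1 : c i1 = Some (y, y') by [].
have c2 : c i2 = Some (g * y, w') by [].
have c3 : c i3 = Some (g ^ y, z') by [].
have c4 : c i4 = Some (g * g ^ y, v') by [].
have [[_ _] [E0 _]] := Hiso _ _ _ _ _ _ _ _ _ c0 c0 c0.
have [_ [E1 _]] := Hiso _ _ _ _ _ _ _ _ _ c0 c1 c2.
have [_ [E2 _]] := Hiso _ _ _ _ _ _ _ _ _ c1 c3 c2.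
have [_ [E3 _]] := Hiso _ _ _ _ _ _ _ _ _ c0 c3 c4.
have [_ [_ E4]] := Hiso _ _ _ _ _ _ _ _ _ c3 c0 c4.
have g1 : g != 1.
  apply: contraNneq nx1 => g1.
  have := E0; rewrite g1 mulg1 => /(_ erefl) E.
  by apply/eqP; apply: (mulgI x); rewrite E mulg1.
suff e : g ^ y * g = g * g ^ y by move: (Hy g1); rewrite e eqxx.
apply/E4.
have e1 := E1 erefl.
have e2 : y' * z' = w' by apply: E2; rewrite -conjgC.
have e3 := E3 erefl.
have ez : z' = x ^ y'.
  apply: (mulgI y'); by rewrite e2 -e1 /conjg !mulgA mulgV mul1g.
have zN : z' \in N by rewrite ez memJ_norm // (subsetP (normal_norm nN)) ?inE.
rewrite -e3; exact: (centsP aN _ zN _ xN).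
Qed.
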